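(* In the setting of the controlled system $\dot g=T_eR_g(\xi)$, $\dot\xi+\sharp[\mathrm{ad}^*_\xi\flat(\xi)]=\sum_a u^af_a$ with $\mathfrak{g}=\mathfrak{d}\oplus\mathfrak{f}$, let $u^*$ be the unique control law making $\mathfrak{d}$ a virtual nonholonomic constraint. Then every solution $\xi(t)$ of the closed-loop system with $\xi(0)\in\mathfrak{d}$ satisfies $$\dot\xi+\nabla^{\mathfrak{c}}_\xi\xi=0,$$ where $\nabla^{\mathfrak{c}}$ is the induced constrained connection; and $\mathfrak{d}$ is geodesically invariant for $\nabla^{\mathfrak{c}}$, i.e. solutions of $\dot\xi+\nabla^{\mathfrak{c}}_\xi\xi=0$ with $\xi(0)\in\mathfrak{d}$ remain in $\mathfrak{d}$.
   Context: $G$ is an $n$-dimensional Lie group with Lie algebra $\mathfrak{g}=T_eG$, an inner product $\langle\cdot,\cdot\rangle$ on $\mathfrak{g}$ inducing a right-invariant metric on $G$ with Levi-Civita connection $\nabla$; $R_g(h)=hg$, $\xi_R(g)=T_eR_g\xi$. $\flat(\xi)(\eta)=\langle\xi,\eta\rangle$, $\sharp=\flat^{-1}$, $\mathrm{ad}^*_\xi$ dual of $\mathrm{ad}_\xi=[\xi,\cdot]$. $f_1,\dots,f_m\in\mathfrak{g}$ are linearly independent spanning $\mathfrak{f}$, $\mathfrak{d}$ is a subspace with $\mathfrak{g}=\mathfrak{d}\oplus\mathfrak{f}$, with projections $\mathfrak{p}:\mathfrak{g}\to\mathfrak{d}$, $\mathfrak{q}:\mathfrak{g}\to\mathfrak{f}$.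 The control law $u^*(\xi)=(\tau^1(\xi),\dots,\tau^m(\xi))$ is defined by $\sharp[\mathrm{ad}^*_\xi\flat(\xi)]=\eta(\xi)+\sum_b\tau^b(\xi)f_b$ with $\eta(\xi)\in\mathfrak{d}$. The Riemannian $\mathfrak{g}$-connection is $\nabla^{\mathfrak{g}}_\xi\eta:=(\nabla_{\xi_R}\eta_R)(e)$, and the induced constrained connection is $\nabla^{\mathfrak{c}}_\xi\eta:=\nabla^{\mathfrak{g}}_\xi\eta+\nabla^{\mathfrak{g}}_\xi(\mathfrak{q}(\eta))-\mathfrak{q}(\nabla^{\mathfrak{g}}_\xi\eta)$. *)

(* Defs.v *)
From HB Require Import structures.
From mathcomp Require Import all_boot all_order all_algebra.
From mathcomp Require Import all_classical all_reals all_analysis.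
Set Implicit Arguments. Unset Strict Implicit. Unset Printing Implicit Defensive.
Import Order.TTheory GRing.Theory Num.Theory.
Import numFieldNormedType.Exports.
Local Open Scope ring_scope.

(* The Lie algebra g = T_e G is modelled as 'rV[R]_n, with bracket [br].   *)

Section LieDefs.
Variables (R : realType) (n : nat).
Implicit Types (x y z : 'rV[R]_n).

Definition ip (M : 'M[R]_n) x y : R := (x *m M *m y^T) 0 0.

(* flat : g -> g^*, covectors are represented as functions g -> R *)
Definition flat (M : 'M[R]_n) x : 'rV[R]_n -> R := fun y => ip M x y.

Definition adstar (br : 'rV[R]_n -> 'rV[R]_n -> 'rV[R]_n) x
  (phi : 'rV[R]_n -> R) : 'rV[R]_n -> R := fun z => phi (br x z).

(* sharp = flat^{-1} on linear functionals: the w with <w, z> = phi z *)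
Definition sharp (M : 'M[R]_n) (phi : 'rV[R]_n -> R) : 'rV[R]_n :=
  (\row_j phi (delta_mx 0 j)) *m invmx M.

Definition is_lie_bracket (br : 'rV[R]_n -> 'rV[R]_n -> 'rV[R]_n) : Prop :=
  [/\ (forall (a : R) x y z, br (a *: x + y) z = a *: br x z + br y z),
      (forall x y, br x y = - br y x) &
      (forall x y z, br x (br y z) + br y (br z x) + br z (br x y) = 0)].

Definition is_inner_product (M : 'M[R]_n) : Prop :=
  M^T = M /\ (forall x, x != 0 -> 0 < ip M x x).

(* The Riemannian g-connection nabla^g_xi eta := (nabla_{xi_R} eta_R)(e)   *)
(* of the Levi-Civita connection of the right-invariant metric: it is      *)
(* characterised by torsion-freeness and metric compatibility on           *)
(* right-invariant vector fields, using [xi_R, eta_R] = -[xi, eta]_R and   *)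
(* the constancy of <eta_R, zeta_R>.                                        *)
Definition is_riemannian_g_connection (br : 'rV[R]_n -> 'rV[R]_n -> 'rV[R]_n)
  (M : 'M[R]_n) (nab : 'rV[R]_n -> 'rV[R]_n -> 'rV[R]_n) : Prop :=
  (forall x y, nab x y - nab y x = - br x y) /\
  (forall x y z, ip M (nab x y) z + ip M y (nab x z) = 0).

(* induced constrained connection, q = projection onto f along d *)
Definition nabla_c (nab : 'rV[R]_n -> 'rV[R]_n -> 'rV[R]_n)
  (q : 'rV[R]_n -> 'rV[R]_n) x y : 'rV[R]_n :=
  nab x y + nab x (q y) - q (nab x y).

End LieDefs.

(* Main.v *)
Require Import Defs.
From HB Require Import structures.
From mathcomp Require Import all_boot all_order all_algebra.
From mathcomp Require Import all_classical all_reals all_analysis.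
From mathcomp Require Import ring lra.
Import Order.TTheory GRing.Theory Num.Theory.
Import numFieldNormedType.Exports.
Local Open Scope ring_scope.

Section Alg.
Variables (R : realType) (n : nat).
Implicit Types (x y z w : 'rV[R]_n) (M : 'M[R]_n).

Lemma lin_sumV (L : 'rV[R]_n -> 'rV[R]_n) :
  (forall (a : R) x y, L (a *: x + y) = a *: L x + L y) ->
  forall z, L z = \sum_j z 0 j *: L (delta_mx 0 j).
Proof.
move=> hL z.
have L0 : L 0 = 0.
  by have := hL (-1) 0 0; rewrite scaler0 addr0 scaleN1r addNr.
have LD : forall x y, L (x + y) = L x + L y.
  by move=> x y; have := hL 1 x y; rewrite !scale1r.
have LZ : forall a x, L (a *: x) = a *: L x.
  by move=> a x; have := hL a x 0; rewrite !addr0 L0 addr0.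
rewrite {1}(row_sum_delta z).
rewrite (big_morph L LD L0); apply: eq_bigr => i _; exact: LZ.
Qed.

Lemma lin_sumR (L : 'rV[R]_n -> R) :
  (forall (a : R) x y, L (a *: x + y) = a * L x + L y) ->
  forall z, L z = \sum_j z 0 j * L (delta_mx 0 j).
Proof.
move=> hL z.
have L0 : L 0 = 0.
  by have := hL (-1) 0 0; rewrite scaler0 addr0 mulN1r addNr.
have LD : forall x y, L (x + y) = L x + L y.
  by move=> x y; have := hL 1 x y; rewrite !scale1r mul1r.
have LZ : forall a x, L (a *: x) = a * L x.
  by move=> a x; have := hL a x 0; rewrite !addr0 L0 addr0.
rewrite {1}(row_sum_delta z).
rewrite (big_morph L LD L0); apply: eq_bigr => i _; exact: LZ.
Qed.

Lemma ipDl M (a : R) x y z : ip M (a *: x + y) z = a * ip M x z + ip M y z.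
Proof. by rewrite /ip !mulmxDl -!scalemxAl !mxE. Qed.

Lemma ipDr M (a : R) x y z : ip M x (a *: y + z) = a * ip M x y + ip M x z.
Proof. by rewrite /ip linearD linearZ /= mulmxDr -scalemxAr !mxE. Qed.

Lemma ip_sym M x y : M^T = M -> ip M x y = ip M y x.
Proof.
move=> hM.
have E : (x *m M *m y^T)^T = y *m M *m x^T by rewrite !trmx_mul trmxK hM mulmxA.
unfold ip. rewrite -E. by rewrite [RHS]mxE.
Qed.

Lemma ip0l M z : ip M 0 z = 0.
Proof. by rewrite /ip !mul0mx mxE. Qed.

Lemma ipNl M x z : ip M (- x) z = - ip M x z.
Proof. by have := ipDl M (-1) x 0 z; rewrite addr0 ip0l addr0 scaleN1r mulN1r. Qed.

Lemma ipBl M x y z : ip M (x - y) z = ip M x z - ip M y z.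
Proof. by have := ipDl M 1 x (- y) z; rewrite scale1r mul1r ipNl. Qed.

Lemma ip_nondeg M w : is_inner_product M -> (forall z, ip M w z = 0) -> w = 0.
Proof.
move=> [_ hpos] hw; apply/eqP; apply: contraT => /hpos.
by rewrite hw ltxx.
Qed.

Lemma ip_eq M w w' : is_inner_product M -> (forall z, ip M w z = ip M w' z) -> w = w'.
Proof.
move=> hM h; apply/eqP; rewrite -subr_eq0; apply/eqP; apply: (ip_nondeg _ _ hM) => z.
by rewrite ipBl h subrr.
Qed.

Lemma M_unit M : is_inner_product M -> M \in unitmx.
Proof.
move=> [_ hpos]; rewrite unitmxE unitfE; apply/negP => /det0P [v v0 vM].
by have := hpos v v0; rewrite /ip vM mul0mx mxE ltxx.
Qed.

Lemma ip_sharp M (phi : 'rV[R]_n -> R) z : is_inner_product M ->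
  (forall (a : R) x y, phi (a *: x + y) = a * phi x + phi y) ->
  ip M (sharp M phi) z = phi z.
Proof.
move=> hM hphi; rewrite /ip /sharp mulmxKV ?M_unit // (lin_sumR _ hphi z) mxE.
by apply: eq_bigr => j _; rewrite !mxE mulrC.
Qed.

End Alg.
Arguments lin_sumV {R n}. Arguments lin_sumR {R n}. Arguments ipDl {R n}.
Arguments ipDr {R n}. Arguments ip_sym {R n}. Arguments ip0l {R n}.
Arguments ipNl {R n}. Arguments ipBl {R n}. Arguments ip_nondeg {R n}.
Arguments ip_eq {R n}. Arguments M_unit {R n}. Arguments ip_sharp {R n}.

Section Nab.
Variables (R : realType) (n : nat) (br : 'rV[R]_n -> 'rV[R]_n -> 'rV[R]_n)
  (M : 'M[R]_n) (nab : 'rV[R]_n -> 'rV[R]_n -> 'rV[R]_n).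
Hypotheses (hbr : is_lie_bracket br) (hM : is_inner_product M)
  (hnab : is_riemannian_g_connection br M nab).
Implicit Types (x y z w : 'rV[R]_n).

Lemma ipBr x y z : ip M x (y - z) = ip M x y - ip M x z.
Proof. by case: hM => hs _; rewrite !(ip_sym M x) // ipBl. Qed.

Lemma br_lin2 (a : R) x y z : br z (a *: x + y) = a *: br z x + br z y.
Proof.
case: hbr => hl ha _.
by rewrite ha hl opprD -scalerN -(ha z x) -(ha z y).
Qed.

Lemma hc' x Y z : ip M (nab x Y) z = - ip M Y (nab x z).
Proof.
case: hnab => _ hc; apply/eqP; rewrite -subr_eq0 opprK; apply/eqP; exact: hc.
Qed.

Lemma ht' u v : nab u v = nab v u - br u v.
Proof. by case: hnab => ht _; rewrite -ht addrC subrK. Qed.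

Lemma nab_lin2 (a : R) x y y' : nab x (a *: y + y') = a *: nab x y + nab x y'.
Proof.
apply: (ip_eq M _ _ hM) => z.
rewrite ipDl !hc' ipDl; ring.
Qed.

Lemma nab_lin1 (a : R) x x' y : nab (a *: x + x') y = a *: nab x y + nab x' y.
Proof.
case: hbr => hl _ _.
rewrite !(ht' _ y) nab_lin2 hl.
by rewrite scalerBr opprD addrACA.
Qed.

Lemma nab0 x : nab x 0 = 0.
Proof. by have := nab_lin2 (-1) x 0 0; rewrite scaler0 addr0 scaleN1r addNr. Qed.

Lemma nab_self x : nab x x = sharp M (adstar br x (flat M x)).
Proof.
apply: (ip_eq M _ _ hM) => z.
rewrite ip_sharp //; last first.
  by move=> a y y'; rewrite /adstar /flat br_lin2 ipDr.
rewrite /adstar /flat hc' (ht' x z) ipBr.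
have h0 : ip M x (nab z x) = 0.
  case: hnab => _ hc; have := hc z x x.
  case: hM => hs _; rewrite (ip_sym M _ _ hs) => H; lra.
by rewrite h0 sub0r opprK.
Qed.

End Nab.

Lemma dexp (R : realType) (k s : R) :
  is_derive s 1 (fun x : R => expR (k * x)) (expR (k * s) * k).
Proof.
have h1 : is_derive s (1:R) (fun x : R => k * x) k.
  have := @is_deriveZ R R R id k s 1 1 (is_derive_id s 1).
  by rewrite /= /GRing.scale /= mulr1.
exact: (is_derive1_comp (is_derive_expR _) h1).
Qed.

Lemma dprod (R : realType) (g : R -> R) (k s : R) :
  derivable g s 1 ->
  is_derive s 1 (fun x : R => g x * expR (k * x))
     (expR (k * s) * ('D_1 g s + k * g s)).
Proof.
move=> dg.
have := is_deriveM (derivableP dg) (@dexp R k s).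
move=> H.
have -> : (fun x : R => g x * expR (k * x)) = (g * (fun x => expR (k*x)))%R by apply/funext.
have -> : expR (k * s) * ('D_1 g s + k * g s) = g s *: (expR (k * s) * k) + expR (k * s) *: 'D_1 g s.
  rewrite /GRing.scale /=; lra.
exact: H.
Qed.

Lemma gron (R : realType) (g : R -> R) (u v K : R) :
  u <= 0 -> 0 <= v ->
  (forall t, u <= t <= v -> derivable g t 1) ->
  g 0 = 0 ->
  (forall t, u <= t <= v -> 0 <= g t) ->
  (forall t, u <= t <= v -> `|'D_1 g t| <= K * g t) ->
  forall t, u <= t <= v -> g t = 0.
Proof.
move=> u0 v0 dg g00 gge0 gK t /andP[ut tv].
have key : forall k, (forall x, u <= x <= v -> derivable (fun x : R => g x * expR (k * x)) x 1)
   /\ (forall x, u <= x <= v -> 'D_1 (fun x : R => g x * expR (k * x)) x =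
         expR (k * x) * ('D_1 g x + k * g x)).
  move=> k; split=> x xuv.
    by have [] := @dprod R g k x (dg x xuv).
  by have := @dprod R g k x (dg x xuv) => H; rewrite derive_val.
have fin : forall k, g t * expR (k * t) <= 0 -> g t = 0.
  move=> k H; have := expR_gt0 (k * t); have := gge0 t; rewrite ut tv => /(_ isT) ?; nra.
have [t0|t0] := leP 0 t.
- apply: (fin (- K)).
  have [dh dh'] := key (- K).
  have := @ler0_derive1_nincr R (fun x : R => g x * expR (- K * x)) 0 v _ _ _ 0 t (lexx 0) t0 tv.
  rewrite g00 mul0r; apply.
  + move=> x; rewrite in_itv /= => /andP[x0 xv]; apply: dh.
    by rewrite (le_trans u0 (ltW x0)) ltW.
  + move=> x; rewrite in_itv /= => /andP[x0 xv].
    have xuv : u <= x <= v by rewrite (le_trans u0 (ltW x0)) ltW.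
    rewrite derive1E dh' //; have := expR_gt0 (- K * x); have := gK x xuv.
    have := ler_norm ('D_1 g x); move=> ? ? ?; nra.
  + apply: derivable_within_continuous => x; rewrite in_itv /= => /andP[x0 xv].
    by apply: dh; rewrite (le_trans u0 x0) xv.
- apply: (fin K).
  have [dh dh'] := key K.
  have := @ger0_derive1_ndecr R (fun x : R => g x * expR (K * x)) u 0 _ _ _ t 0 ut (ltW t0) (lexx 0).
  rewrite g00 mul0r; apply.
  + move=> x; rewrite in_itv /= => /andP[x0 xv]; apply: dh.
    by rewrite (ltW x0) (le_trans (ltW xv) v0).
  + move=> x; rewrite in_itv /= => /andP[x0 xv].
    have xuv : u <= x <= v by rewrite (ltW x0) (le_trans (ltW xv) v0).
    rewrite derive1E dh' //; have := expR_gt0 (K * x); have := gK x xuv.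
    have := lerNnormlW (gK x xuv); move=> ? ? ?; nra.
  + apply: derivable_within_continuous => x; rewrite in_itv /= => /andP[x0 xv].
    by apply: dh; rewrite x0 (le_trans xv v0).
Qed.

Lemma coord_le (R : realType) n (x : 'rV[R]_n) k : `|x 0 k| <= `|x|.
Proof.
rewrite [leRHS]/Num.Def.normr/= mx_normrE.
exact: (le_bigmax _ _ (0, k)).
Qed.

Lemma dcoord (R : realType) n (xi : R -> 'rV[R]_n) s k :
  derivable xi s 1 -> is_derive s 1 (fun r => xi r 0 k) ('D_1 xi s 0 k).
Proof.
move=> d; rewrite (derive_mx d) mxE; apply: derivableP.
exact: ((derivable_mxP _ _ _).1 d 0 k).
Qed.

Lemma dlincomb (R : realType) n (xi : R -> 'rV[R]_n) s (w : 'I_n -> R) :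
  derivable xi s 1 ->
  is_derive s 1 (fun r => \sum_k w k * xi r 0 k) (\sum_k w k * 'D_1 xi s 0 k).
Proof.
move=> d.
have -> : (fun r => \sum_k w k * xi r 0 k) = \sum_k (w k \*: (fun r => xi r 0 k)).
  by rewrite fct_sumE; apply/funext => r.
apply: is_derive_sum => k.
exact: (@is_deriveZ _ _ _ _ (w k) _ _ _ (@dcoord R n xi s k d)).
Qed.

Lemma dsq (R : realType) (h : R -> R) (s dh : R) :
  is_derive s (1:R) h dh -> is_derive s (1:R) (fun r => h r * h r) (h s * dh + h s * dh).
Proof.
move=> H.
have -> : (fun r => h r * h r) = (h * h)%R by apply/funext.
exact: is_deriveM.
Qed.


Local Open Scope classical_set_scope.
Lemma xi_cont (R : realType) n (xi : R -> 'rV[R]_n) (u v : R) :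
  (forall s, u <= s <= v -> derivable xi s 1) ->
  {within `[u, v], continuous (fun s => `|xi s|)}.
Proof.
move=> d; apply/continuous_in_subspaceT => s /[1!inE].
move=> suv; have {}suv : u <= s <= v by move: suv; rewrite /= in_itv.
apply: continuous_comp; last exact: norm_continuous.
apply/differentiable_continuous; rewrite -derivable1_diffP.
exact: d.
Qed.

Local Close Scope classical_set_scope.

Lemma zero_traj (R : realType) (n : nat) (a c : R) (xi : R -> 'rV[R]_n) (P : 'M[R]_n)
  (B : 'rV[R]_n -> 'rV[R]_n -> 'rV[R]_n) :
  a < 0 < c -> (forall t, a < t < c -> derivable xi t 1) ->
  (forall (k : R) x y y', B x (k *: y + y') = k *: B x y + B x y') ->
  (forall (k : R) x x' y, B (k *: x + x') y = k *: B x y + B x' y) ->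
  (forall t, a < t < c -> 'D_1 xi t *m P = B (xi t) (xi t *m P)) ->
  xi 0 *m P = 0 ->
  forall t, a < t < c -> xi t *m P = 0.
Proof.
move=> /andP[a0 c0] dxi B2 B1 eqD x0P.
pose e (k : 'I_n) : 'rV[R]_n := delta_mx 0 k.
pose cc k l j := B (e k) (e l) 0 j.
have Bexp : forall x y j, B x y 0 j = \sum_l \sum_k y 0 l * x 0 k * cc k l j.
  move=> x y j.
  rewrite (lin_sumV (B x) (fun k y y' => B2 k x y y') y) summxE; apply: eq_bigr => l _.
  rewrite mxE (lin_sumV (fun z => B z (e l)) (fun k x x' => B1 k x x' (e l)) x) summxE mulr_sumr.
  by apply: eq_bigr => k _; rewrite mxE mulrA.
pose yl (l : 'I_n) (s : R) := (xi s *m P) 0 l.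
have yl_sum : forall l s, yl l s = \sum_k P k l * xi s 0 k.
  by move=> l s; rewrite /yl mxE; apply: eq_bigr => k _; rewrite mulrC.
pose g (s : R) := \sum_l yl l s * yl l s.
have dyl : forall s, a < s < c -> forall l, is_derive s 1 (yl l) (('D_1 xi s *m P) 0 l).
  move=> s hs l.
  have -> : yl l = (fun r => \sum_k P k l * xi r 0 k) by apply/funext => r; exact: yl_sum.
  apply: is_derive_eq; first exact: (@dlincomb R n xi s (fun k => P k l) (dxi s hs)).
  by rewrite mxE; apply: eq_bigr => k _; rewrite mulrC.
have dg : forall s, a < s < c -> is_derive s 1 g
    (\sum_l (yl l s * ('D_1 xi s *m P) 0 l + yl l s * ('D_1 xi s *m P) 0 l)).
  move=> s hs.
  have -> : g = \sum_l (fun r => yl l r * yl l r) by rewrite fct_sumE.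
  apply: is_derive_sum => l; exact: dsq (dyl s hs l).
have main : forall u v, a < u -> u <= 0 -> 0 <= v -> v < c ->
    forall s, u <= s <= v -> g s = 0.
  move=> u v au u0 v0 vc.
  have inI : forall s, u <= s <= v -> a < s < c.
    by move=> s /andP[us sv]; rewrite (lt_le_trans au us) (le_lt_trans sv vc).
  have [c1 c1I Nmax] := EVT_max (le_trans u0 v0) (@xi_cont R n xi u v (fun s hs => dxi s (inI s hs))).
  set N := `|xi c1|.
  have hN : forall s k, u <= s <= v -> `|xi s 0 k| <= N.
    move=> s k hs; apply: le_trans (@coord_le R n (xi s) k) _.
    by apply: Nmax; rewrite in_itv /=.
  pose K := \sum_l \sum_(l' < n) \sum_(k < n) 2 * N * `|cc k l' l|.
  apply: (@gron R g u v K u0 v0).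
  - by move=> s hs; have [] := dg s (inI s hs).
  - by rewrite /g; apply: big1 => l _; rewrite /yl x0P mxE mul0r.
  - by move=> s _; apply: sumr_ge0 => l _; rewrite -expr2 sqr_ge0.
  move=> s hs; have [_ ->] := dg s (inI s hs).
  have hD : forall l, ('D_1 xi s *m P) 0 l = \sum_l' \sum_k yl l' s * xi s 0 k * cc k l' l.
    by move=> l; rewrite eqD ?inI // Bexp.
  have gsq : forall l, yl l s * yl l s <= g s.
    move=> l; rewrite /g (bigD1 l) //= lerDl; apply: sumr_ge0 => i _.
    by rewrite -expr2 sqr_ge0.
  have yy : forall l l', `|yl l s * yl l' s| <= g s.
    move=> l l'; have := gsq l; have := gsq l'; rewrite normrM.
    have := sqr_ge0 (`|yl l s| - `|yl l' s|).
    have nl : `|yl l s| * `|yl l s| = yl l s * yl l s.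
      by rewrite -normrM ger0_norm // -expr2 sqr_ge0.
    have nl' : `|yl l' s| * `|yl l' s| = yl l' s * yl l' s.
      by rewrite -normrM ger0_norm // -expr2 sqr_ge0.
    move=> ? ? ?; nra.
  rewrite /K big_distrl /=; apply: le_trans (ler_norm_sum _ _ _) _; apply: ler_sum => l _.
  rewrite big_distrl /= hD.
  set S := (X in yl l s * X + _).
  rewrite (_ : yl l s * S + yl l s * S = (2 * yl l s) * S); last by ring.
  rewrite /S mulr_sumr.
  apply: le_trans (ler_norm_sum _ _ _) _; apply: ler_sum => l' _.
  rewrite mulr_sumr big_distrl /=.
  apply: le_trans (ler_norm_sum _ _ _) _; apply: ler_sum => k _.
  rewrite (_ : 2 * yl l s * (yl l' s * xi s 0 k * cc k l' l) =
     (2 * cc k l' l * xi s 0 k) * (yl l s * yl l' s)); last by ring.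
  have h1 : `|2 * cc k l' l * xi s 0 k| <= 2 * N * `|cc k l' l|.
    rewrite !normrM normr_nat; have := hN s k hs; have := normr_ge0 (cc k l' l).
    have := normr_ge0 (xi s 0 k); move=> ? ? ?; nra.
  rewrite normrM.
  exact: (ler_pM (normr_ge0 _) (normr_ge0 _) h1 (yy l l')).
move=> t /andP[ta tc].
have gt : g t = 0.
  have [t0|t0] := leP t 0.
    by apply: (main t 0) => //; rewrite ?lexx ?t0.
  by apply: (main 0 t) => //; rewrite ?lexx ?ltW.
apply/rowP => l; rewrite [RHS]mxE.
have nn : forall i : 'I_n, true -> 0 <= yl i t * yl i t.
  by move=> i _; rewrite -expr2 sqr_ge0.
have := @psumr_eq0P _ _ _ _ nn gt l isT.
by move/eqP; rewrite mulf_eq0 orbb => /eqP.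
Qed.

Theorem mainTheorem12 (R : realType) (n m : nat)
  (br : 'rV[R]_n -> 'rV[R]_n -> 'rV[R]_n) (M : 'M[R]_n)
  (nab : 'rV[R]_n -> 'rV[R]_n -> 'rV[R]_n)
  (f : 'I_m -> 'rV[R]_n) (D : 'M[R]_n)
  (tau : 'rV[R]_n -> 'I_m -> R) :
  is_lie_bracket br ->
  is_inner_product M ->
  is_riemannian_g_connection br M nab ->
  (* f_1, ..., f_m linearly independent, spanning F *)
  row_free (\matrix_(b < m) f b) ->
  (* g = d (+) f *)
  ((D :&: \matrix_(b < m) f b)%MS == (0 : 'M[R]_n))%MS ->
  ((D + \matrix_(b < m) f b)%MS == (1%:M : 'M[R]_n))%MS ->
  (* u^* : sharp[ad^*_xi flat xi] = eta(xi) + sum_b tau^b(xi) f_b, eta(xi) in d *)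
  (forall xi : 'rV[R]_n,
     (sharp M (adstar br xi (flat M xi)) - \sum_(b < m) tau xi b *: f b <= D)%MS) ->
  let q := fun v : 'rV[R]_n => v *m proj_mx (<<\matrix_(b < m) f b>>%MS) D in
  (* (1) closed-loop solutions starting in d satisfy xi' + nabla^c_xi xi = 0 *)
  (forall (a c : R) (xi : R -> 'rV[R]_n), a < 0 < c ->
     (forall t, a < t < c -> derivable xi t 1) ->
     (forall t, a < t < c ->
        'D_1 xi t + sharp M (adstar br (xi t) (flat M (xi t)))
        = \sum_(b < m) tau (xi t) b *: f b) ->
     (xi 0 <= D)%MS ->
     forall t, a < t < c -> 'D_1 xi t + nabla_c nab q (xi t) (xi t) = 0) /\
  (* (2) d is geodesically invariant for nabla^c *)
  (forall (a c : R) (xi : R -> 'rV[R]_n), a < 0 < c ->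
     (forall t, a < t < c -> derivable xi t 1) ->
     (forall t, a < t < c -> 'D_1 xi t + nabla_c nab q (xi t) (xi t) = 0) ->
     (xi 0 <= D)%MS ->
     forall t, a < t < c -> (xi t <= D)%MS).

Proof.
move=> hbr hM hnab hfree hcap hsum hU q; rewrite {}/q.
set F := \matrix_(b < m) f b.
set P := proj_mx <<F>>%MS D.
have dx : (<<F>> :&: D)%MS = 0.
  rewrite capmxC; apply/eqmx0P.
  rewrite (cap_eqmx (eqmx_refl D) (genmxE F)); apply/andP; split; [by case/andP: hcap | exact: sub0mx].
have full : forall v : 'rV[R]_n, (v <= <<F>> + D)%MS.
  move=> v; move/eqmxP: hsum => hs.
  have h1 : (1%:M <= D + F)%MS by rewrite hs.
  rewrite addsmxC (adds_eqmx (eqmx_refl D) (genmxE F)); exact: submx_trans (submx1 v) h1.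
have qF : forall w : 'rV[R]_n, (w <= F)%MS -> w *m P = w.
  by move=> w hw; apply: proj_mx_id dx _; rewrite genmxE.
have qD : forall w : 'rV[R]_n, (w <= D)%MS -> w *m P = 0.
  by move=> w hw; apply: proj_mx_0 dx hw.
have Dq : forall v : 'rV[R]_n, v *m P = 0 -> (v <= D)%MS.
  by move=> v hv; have := proj_mx_compl_sub (full v); rewrite -/P hv subr0.
have PP : forall v : 'rV[R]_n, v *m P *m P = v *m P.
  by move=> v; rewrite -mulmxA proj_mx_proj.
have fF : forall x, ((\sum_(b < m) tau x b *: f b)%R <= F)%MS.
  move=> x; apply: summx_sub => b _; apply: scalemx_sub.
  by apply: (eq_row_sub b); rewrite rowK.
have NS : forall x, nab x x = sharp M (adstar br x (flat M x)).
  exact: (@nab_self R n br M nab hbr hM hnab).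
have NL1 : forall (k : R) x x' y, nab (k *: x + x') y = k *: nab x y + nab x' y.
  exact: (@nab_lin1 R n br M nab hbr hM hnab).
have NL2 : forall (k : R) x y y', nab x (k *: y + y') = k *: nab x y + nab x y'.
  exact: (@nab_lin2 R n br M nab hM hnab).
have N0 : forall x, nab x 0 = 0 :=  (@nab0 R n br M nab hM hnab).
have nabS : forall x, nab x x *m P = (\sum_(b < m) tau x b *: f b)%R.
  move=> x; have h := hU x; rewrite -NS in h.
  have := qD _ h; rewrite mulmxBl (qF _ (fF x)) => /eqP; rewrite subr_eq0 => /eqP.
  by [].
split.
- move=> a c xi hac dxi hcl x0D t ht.
  have hP0 : xi 0 *m P = 0 by apply: qD.
  have eq1 : forall s, a < s < c ->
      'D_1 xi s = \sum_(b < m) tau (xi s) b *: f b - nab (xi s) (xi s).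
    by move=> s hs; rewrite NS -(hcl s hs) addrK.
  have eqD0 : forall s, a < s < c -> 'D_1 xi s *m P = (fun _ _ => 0) (xi s) (xi s *m P).
    by move=> s hs; rewrite eq1 // mulmxBl nabS (qF _ (fF _)) subrr.
  have zt : xi t *m P = 0.
    apply: (@zero_traj R n a c xi P (fun _ _ => 0) hac dxi _ _ eqD0 hP0 t ht).
      by move=> *; rewrite scaler0 addr0.
    by move=> *; rewrite scaler0 addr0.
  rewrite /nabla_c /= zt N0 addr0 nabS eq1 //.
  by rewrite addrA subrK subrr.
- move=> a c xi hac dxi hgeo x0D t ht.
  have hP0 : xi 0 *m P = 0 by apply: qD.
  have eqD : forall s, a < s < c -> 'D_1 xi s *m P = - (nab (xi s) (xi s *m P) *m P).
    move=> s hs.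
    have H : 'D_1 xi s = - nabla_c nab (fun v => v *m P) (xi s) (xi s).
      by apply/eqP; rewrite -addr_eq0 hgeo.
    rewrite H /nabla_c mulNmx !mulmxBl mulmxDl PP.
    by rewrite addrAC subrr add0r.
  apply: Dq.
  apply: (@zero_traj R n a c xi P (fun x y => - (nab x y *m P)) hac dxi _ _ eqD hP0 t ht).
  + by move=> k x y y'; rewrite NL2 mulmxDl -scalemxAl scalerN opprD.
  + by move=> k x x' y; rewrite NL1 mulmxDl -scalemxAl scalerN opprD.
Qed.
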